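(* For any $m\ge2$, any $\beta_1,\dots,\beta_m\in\Delta_+$, any $F_{\beta_k}\in\mathfrak g_{-\beta_k}$ ($k=1,\dots,m$) and any $1\le\ell<m$, $$A_X(F_{\beta_1}\cdots F_{\beta_\ell}F_{\beta_{\ell+1}}\cdots F_{\beta_m})-A_X(F_{\beta_1}\cdots F_{\beta_{\ell+1}}F_{\beta_\ell}\cdots F_{\beta_m})=A_X(F_{\beta_1}\cdots[F_{\beta_\ell},F_{\beta_{\ell+1}}]\cdots F_{\beta_m}),$$ where on the right $[F_{\beta_\ell},F_{\beta_{\ell+1}}]\in\mathfrak g_{-(\beta_\ell+\beta_{\ell+1})}$ is treated as a single factor (the right side being $0$ if this commutator is $0$). Consequently $A_X$ extends to a well-defined linear map from $U(\mathfrak n_-)$ to $U(\mathfrak n_-)$-valued rational functions of $X_1,\dots,X_r$.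
   Context: $\mathfrak g$ is a simple complex Lie algebra with Cartan subalgebra $\mathfrak h$, roots $\Delta$, simple roots $\alpha_1,\dots,\alpha_r$, positive roots $\Delta_+$, $\mathfrak n_-=\bigoplus_{\alpha\in\Delta_+}\mathfrak g_{-\alpha}$. For $\beta\in\mathfrak h^*$ and $\lambda\in\mathfrak h$ put $X_\beta=e^{-2\pi i\beta(\lambda)}$, $X_j=X_{\alpha_j}$ (so $X_\beta$ is a monomial in $X_1,\dots,X_r$ for $\beta$ in the root lattice). For $\beta_1,\dots,\beta_m\in\Delta_+$ (the $\beta_k$ need not be distinct), $F_{\beta_k}\in\mathfrak g_{-\beta_k}$, and a permutation $\sigma\in S_m$, let $a_k^\sigma=\#\{j:\ k\le j\le m-1,\ \sigma(j)>\sigma(j+1)\}$ and $$A_X^\sigma(F_{\beta_1}\cdots F_{\beta_m})=\prod_{k=1}^m\frac{X_{\beta_{\sigma(k)}}^{a_k^\sigma+1}}{1-X_{\beta_{\sigma(1)}}\cdots X_{\beta_{\sigma(k)}}}\;F_{\beta_{\sigma(1)}}\cdots F_{\beta_{\sigma(m)}},$$ $A_X(F_{\beta_1}\cdots F_{\beta_m})=\sum_{\sigma\in S_m}A_X^\sigma(F_{\beta_1}\cdots F_{\beta_m})$ (a formula for each ordered tuple of root vectors, products taken in $U(\mathfrak n_-)$), and $A_X(1)=1$; $A_X$ is linear in each $F_{\beta_k}$. *)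

(* Defs.v *)
From HB Require Import structures.
From mathcomp Require Import all_boot all_order all_algebra all_fingroup.
Set Implicit Arguments. Unset Strict Implicit. Unset Printing Implicit Defensive.
Import GRing.Theory.
Local Open Scope ring_scope.

(* A positive root beta = sum_j n_j alpha_j is encoded by its coefficient
   vector n : 'I_r -> nat; X_beta = prod_j X_j ^ n_j. *)
Definition Xroot (K : fieldType) (r : nat) (X : 'I_r -> K) (b : 'I_r -> nat) : K :=
  \prod_(j < r) X j ^+ b j.

(* value of a permutation at a nat index (0 outside range) *)
Definition permv (m : nat) (s : 'S_m) (j : nat) : nat :=
  if (insub j : option 'I_m) is Some i then nat_of_ord (s i) else 0%N.

(* a_k^sigma, 0-indexed: #{ j : k <= j <= m-2, sigma(j) > sigma(j+1) } *)
Definition adesc (m : nat) (s : 'S_m) (k : nat) : nat :=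
  count (fun j => (permv s j.+1 < permv s j)%N) (iota k (m.-1 - k)).

(* the scalar coefficient of A_X^sigma for weights w k = X_{beta_k} *)
Definition AXcoef (K : fieldType) (m : nat) (w : 'I_m -> K) (s : 'S_m) : K :=
  \prod_(k < m) (w (s k) ^+ (adesc s k).+1 /
                 (1 - \prod_(i < m | (i <= k)%N) w (s i))).

Definition AX (K : fieldType) (A : algType K) (r : nat) (X : 'I_r -> K)
    (bs : seq ('I_r -> nat)) (Fs : seq A) : A :=
  \sum_(s : 'S_(size Fs))
     AXcoef (fun k : 'I_(size Fs) => Xroot X (nth (fun _ => 0%N) bs k)) s
       *: \prod_(k < size Fs) nth 0 Fs (s k).

Definition swap_at (T : Type) (x0 : T) (i : nat) (s : seq T) : seq T :=
  take i s ++ nth x0 s i.+1 :: nth x0 s i :: drop i.+2 s.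

Definition merge_at (T : Type) (i : nat) (y : T) (s : seq T) : seq T :=
  take i s ++ y :: drop i.+2 s.

Definition addroot (r : nat) (b c : 'I_r -> nat) : 'I_r -> nat := fun j => (b j + c j)%N.

(* Main.v *)
Require Import Defs.
From HB Require Import structures.
From mathcomp Require Import all_boot all_order all_algebra all_fingroup.
From Stdlib Require Import Lia.
Import GRing.Theory.
Local Open Scope ring_scope.

Section Prods.
Variable R : nzRingType.

Lemma split3 (N p : nat) (g : nat -> R) : (p < N)%N ->
  \prod_(k < N) g k = (\prod_(k < p) g k) * g p * \prod_(p.+1 <= k < N) g k.
Proof.
move=> hp; rewrite -!(big_mkord xpredT) (big_cat_nat (leq0n p) (ltnW hp)) /=.
by rewrite (big_ltn hp) mulrA.
Qed.

Lemma merge_prod (N p : nat) (h g : nat -> R) : (p < N)%N ->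
  (forall k, (k < p)%N -> g k = h k) -> g p = h p * h p.+1 ->
  (forall k, (p < k < N)%N -> g k = h k.+1) ->
  \prod_(k < N.+1) h k = \prod_(k < N) g k.
Proof.
move=> hp h1 h2 h3; rewrite (split3 _ _ _ hp).
have hp1 : (p < N.+1)%N by apply: ltnW.
have hp2 : (p.+1 < N.+1)%N by [].
rewrite -!(big_mkord xpredT) (big_cat_nat (leq0n p) (ltnW hp1)) /=.
rewrite (big_ltn hp1) (big_ltn hp2).
rewrite -!mulrA h2 -!mulrA; congr (_ * _).
  by apply: eq_big_nat => k /andP[_ hk]; rewrite h1.
congr (_ * (_ * _)).
rewrite big_add1 /=.
apply: eq_big_nat => k /andP[hk1 hk2]; rewrite h3 //.
by rewrite hk1.
Qed.

Lemma diff_prod (N p : nat) (g1 g2 g3 : nat -> R) : (p < N)%N ->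
  (forall k, (k < N)%N -> k != p -> g1 k = g3 k /\ g2 k = g3 k) ->
  g3 p = g1 p - g2 p ->
  \prod_(k < N) g1 k - \prod_(k < N) g2 k = \prod_(k < N) g3 k.
Proof.
move=> hp h h3; rewrite !(split3 _ _ _ hp) h3.
have e1 : \prod_(k < p) g1 k = \prod_(k < p) g3 k.
  apply: eq_bigr => k _; apply: (proj1 (h k _ _)); first by apply: ltn_trans hp.
  by rewrite neq_ltn ltn_ord.
have e2 : \prod_(k < p) g2 k = \prod_(k < p) g3 k.
  apply: eq_bigr => k _; apply: (proj2 (h k _ _)); first by apply: ltn_trans hp.
  by rewrite neq_ltn ltn_ord.
have e3 : \prod_(p.+1 <= k < N) g1 k = \prod_(p.+1 <= k < N) g3 k.
  apply: eq_big_nat => k /andP[hk1 hk2]; apply: (proj1 (h k hk2 _)).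
  by rewrite neq_ltn hk1 orbT.
have e4 : \prod_(p.+1 <= k < N) g2 k = \prod_(p.+1 <= k < N) g3 k.
  apply: eq_big_nat => k /andP[hk1 hk2]; apply: (proj2 (h k hk2 _)).
  by rewrite neq_ltn hk1 orbT.
by rewrite e1 e2 e3 e4 mulrBr mulrBl.
Qed.
End Prods.


Section Coefs.
Variable K : fieldType.
Implicit Types (f g : nat -> K) (e : nat -> nat).

Definition pre f k := \prod_(j < k.+1) f j.
Definition coefG N f e := \prod_(k < N) (f k ^+ (e k).+1 / (1 - pre f k)).
Definition Cj N f e (p : nat) :=
  (\prod_(k < N) f k ^+ (e k).+1) * \prod_(k < N | nat_of_ord k != p) (1 - pre f k)^-1.

Lemma pre_ext f g k : (forall j, (j <= k)%N -> f j = g j) -> pre f k = pre g k.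
Proof. by move=> h; apply: eq_bigr => j _; rewrite h // -ltnS. Qed.

Lemma coefG_ext N f g e e' : (forall k, (k < N)%N -> f k = g k) ->
  (forall k, (k < N)%N -> e k = e' k) -> coefG N f e = coefG N g e'.
Proof.
move=> hf he; apply: eq_bigr => k _; rewrite hf // he //.
by rewrite (@pre_ext f g) // => j hj; rewrite hf // (leq_ltn_trans hj).
Qed.

Lemma coefG_shift N f e p : (p < N)%N ->
  coefG N f (fun k => e k + (k <= p))%N = coefG N f e * pre f p.
Proof.
move=> hp; rewrite /coefG /pre.
have -> : \prod_(j < p.+1) f j = \prod_(k < N) f k ^+ (k <= p).
  rewrite (big_ord_widen N f hp) big_mkcond /=; apply: eq_bigr => k _.
  by rewrite ltnS; case: (nat_of_ord k <= p)%N; rewrite ?expr1 ?expr0.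
rewrite -big_split /=; apply: eq_bigr => k _.
by rewrite -addSn exprD mulrAC.
Qed.

Lemma coefG_Cj N f e p : (p < N)%N -> 1 - pre f p != 0 ->
  coefG N f e * (1 - pre f p) = Cj N f e p.
Proof.
move=> hp hn; rewrite /coefG /Cj.
under eq_bigr do rewrite mulrC.
rewrite big_split /= mulrC (bigD1 (Ordinal hp)) //= mulrA mulrA.
rewrite [in RHS]mulrC; congr (_ * _).
by rewrite mulfV // mul1r.
Qed.

Lemma pre_merge f g p k : (p <= k)%N ->
  (forall j, (j < p)%N -> g j = f j) -> g p = f p * f p.+1 ->
  (forall j, (p < j <= k)%N -> g j = f j.+1) -> pre g k = pre f k.+1.
Proof.
move=> hpk h1 h2 h3; rewrite /pre; symmetry.
apply: (@merge_prod _ k.+1 p) => //.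
Qed.

Lemma Cj_merge N f g e e' p : (p < N)%N -> e p = e p.+1 ->
  (forall k, (k < p)%N -> g k = f k) -> g p = f p * f p.+1 ->
  (forall k, (p < k < N)%N -> g k = f k.+1) ->
  (forall k, (k < p)%N -> e' k = e k) -> (forall k, (p <= k < N)%N -> e' k = e k.+1) ->
  Cj N.+1 f e p = coefG N g e'.
Proof.
move=> hp he h1 h2 h3 he1 he2; rewrite /Cj /coefG.
under [RHS]eq_bigr do rewrite mulrC.
rewrite big_split /= mulrC; congr (_ * _).
  rewrite big_mkcond /=.
  apply: (@merge_prod _ N p (fun k => if k != p then (1 - pre f k)^-1 else 1) (fun k => (1 - pre g k)^-1)) => //.
  - move=> k hk; have -> : k != p by rewrite neq_ltn hk.
    by rewrite (@pre_ext g f) // => j hj; rewrite h1 // (leq_ltn_trans hj hk).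
  - have hn : (p.+1 != p) by rewrite neq_ltn ltnSn orbT.
    rewrite eqxx hn mul1r (@pre_merge f g p p) //.
    by move=> j /andP[hj1 hj2]; rewrite h3 // hj1 (leq_ltn_trans hj2 hp).
  - move=> k /andP[hk1 hk2]; have -> : k.+1 != p by rewrite neq_ltn ltnS (ltnW hk1) orbT.
    rewrite (@pre_merge f g p k) //; first by apply: ltnW.
    by move=> j /andP[hj1 hj2]; apply: h3; rewrite hj1 (leq_ltn_trans hj2 hk2).
apply: (@merge_prod _ N p (fun k => f k ^+ (e k).+1) (fun k => g k ^+ (e' k).+1)) => //.
- by move=> k hk; rewrite h1 // he1.
- by rewrite h2 (he2 p) ?leqnn ?hp // he exprMn.
- by move=> k /andP[hk1 hk2]; rewrite h3 ?hk1 // he2 // (ltnW hk1).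
Qed.

Definition tau (p k : nat) : nat := if k == p then p.+1 else if k == p.+1 then p else k.

Lemma Cj_swap N f f' e p : (p < N)%N -> e p = e p.+1 ->
  (forall k, (k < N.+1)%N -> f' k = f (tau p k)) ->
  Cj N.+1 f' e p = Cj N.+1 f e p.
Proof.
move=> hp he hf.
pose g k := if (k < p)%N then f k else if k == p then f p * f p.+1 else f k.+1.
pose e' k := if (k < p)%N then e k else e k.+1.
have ltSp : (p < N.+1)%N by apply: ltnW.
have hnp : p != p.+1 by rewrite neq_ltn ltnSn.
have Hg1 : forall k, (k < p)%N -> g k = f k by move=> k hk; rewrite /g hk.
have Hg2 : g p = f p * f p.+1 by rewrite /g ltnn eqxx.
have Hg3 : forall k, (p < k < N)%N -> g k = f k.+1.
  by move=> k /andP[hk _]; rewrite /g ltnNge (ltnW hk) /= ifN // neq_ltn hk orbT.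
have He1 : forall k, (k < p)%N -> e' k = e k by move=> k hk; rewrite /e' hk.
have He2 : forall k, (p <= k < N)%N -> e' k = e k.+1.
  by move=> k /andP[hk _]; rewrite /e' ltnNge hk.
rewrite (@Cj_merge N f g e e') // (@Cj_merge N f' g e e') //.
- move=> k hk; rewrite Hg1 // hf; last by apply: (ltn_trans hk).
  by rewrite /tau ifN ?ifN // neq_ltn ?hk // (ltn_trans hk).
- rewrite Hg2 hf // hf // /tau eqxx ifN; last by rewrite eq_sym.
  by rewrite eqxx mulrC.
- move=> k /andP[hk1 hk2]; rewrite Hg3 ?hk1 // hf // /tau.
  have h1' : (k.+1 == p) = false by apply/negbTE; rewrite neq_ltn ltnS (ltnW hk1) orbT.
  have h2' : (k.+1 == p.+1) = false by apply/negbTE; rewrite neq_ltn !ltnS hk1 orbT.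
  by rewrite h1' h2'.
Qed.
End Coefs.
Arguments pre {K}.
Arguments coefG {K}.
Arguments Cj {K}.


Lemma permvE N (s : 'S_N) (k : 'I_N) : permv s k = s k.
Proof. by rewrite /permv valK. Qed.

Lemma permv_lt N (s : 'S_N) k : (k < N)%N -> (permv s k < N)%N.
Proof. by move=> hk; rewrite -[k]/(nat_of_ord (Ordinal hk)) permvE. Qed.

Lemma permv_inj N (s : 'S_N) x y : (x < N)%N -> (y < N)%N ->
  permv s x = permv s y -> x = y.
Proof.
move=> hx hy; rewrite -[x]/(nat_of_ord (Ordinal hx)) -[y]/(nat_of_ord (Ordinal hy)) !permvE.
by move/val_inj/perm_inj => ->.
Qed.
Arguments permv_inj {N s x y}.

Lemma ltnS1 x m : (x < m)%N -> (x < m.+1)%N.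
Proof. exact: ltnW. Qed.
Arguments ltnS1 {x m}.

Lemma tauK p x : tau p (tau p x) = x.
Proof.
rewrite /tau; case: (eqVneq x p) => [->|hxp]; first by rewrite eqxx ifN ?eqxx // neq_ltn ltnSn orbT.
case: (eqVneq x p.+1) => [->|hxp1]; first by rewrite eqxx.
by rewrite (negbTE hxp) (negbTE hxp1).
Qed.

Lemma tau_lt p N x : (p.+1 < N)%N -> (x < N)%N -> (tau p x < N)%N.
Proof.
move=> hp hx; rewrite /tau; case: ifP => _ //; case: ifP => _ //; exact: ltnW.
Qed.

Lemma tau_ltE i a b : a != b -> ~~ ((a == i) && (b == i.+1)) ->
  ~~ ((a == i.+1) && (b == i)) -> (tau i b < tau i a)%N = (b < a)%N.
Proof.
move=> /eqP hab; rewrite /tau.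
case: (eqVneq a i) => [hai|/eqP hai]; case: (eqVneq b i) => [hbi|/eqP hbi];
case: (eqVneq a i.+1) => [hai1|/eqP hai1]; case: (eqVneq b i.+1) => [hbi1|/eqP hbi1] //=;
  try (by move=> *; exfalso; lia);
  by move=> _ _; apply/idP/idP => /ltP h; apply/ltP; lia.
Qed.

Lemma count_bump (a b : pred nat) s j0 :
  (forall j, j \in s -> j != j0 -> a j = b j) -> a j0 -> ~~ b j0 ->
  count a s = (count b s + count (pred1 j0) s)%N.
Proof.
move=> h ha hb; elim: s h => [|x s IH] h //=.
rewrite IH; last by move=> j hj; apply: h; rewrite inE hj orbT.
case: (eqVneq x j0) => [->|hx].
  by rewrite ha (negbTE hb) /= add0n addnCA.
by rewrite (h x) ?inE ?eqxx // /= add0n addnA.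
Qed.

Lemma count_pred1_iota k L j : count (pred1 j) (iota k L) = ((k <= j) && (j < k + L))%N.
Proof. by rewrite (count_uniq_mem _ (iota_uniq k L)) mem_iota. Qed.

Lemma sum_lift (R : nmodType) m (a b : 'I_m.+1) (G : 'S_m.+1 -> R) :
  \sum_(s : 'S_m.+1 | s a == b) G s = \sum_(s : 'S_m) G (lift_perm a b s).
Proof.
rewrite (reindex (lift_perm a b)); last first.
  pose ulsf i (s : 'S_m.+1) k := odflt k (unlift (s i) (s (lift i k))).
  have ulsfK i (s : 'S_m.+1) k: lift (s i) (ulsf i s k) = s (lift i k).
    rewrite /ulsf; have:= neq_lift i k.
    by rewrite -(can_eq (permK s)) => /unlift_some[] ? ? ->.
  have inj_ulsf: injective (ulsf a _).
    move=> s; apply: can_inj (ulsf (s a) s^-1%g) _ => k'.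
    by rewrite {1}/ulsf ulsfK !permK liftK.
  exists (fun s => perm (inj_ulsf s)) => [s _ | s].
    by apply/permP=> k'; rewrite permE /ulsf lift_perm_lift lift_perm_id liftK.
  move/(s _ =P _) => si0; apply/permP=> k.
  case: (unliftP a k) => [k'|] ->; rewrite ?lift_perm_id //.
  by rewrite lift_perm_lift -si0 permE ulsfK.
by apply: eq_bigl => s; rewrite lift_perm_id eqxx.
Qed.

Definition SS (K : fieldType) (A : algType K) N (W : nat -> K) (F : nat -> A) :=
  \sum_(s : 'S_N) coefG N (fun k => W (permv s k)) (adesc s) *: \prod_(k < N) F (permv s k).

Definition mrg (R : Type) (h : nat -> R) (y : R) (c : nat) :=
  fun k => if (k < c)%N then h k else if k == c then y else h k.+1.
Arguments mrg {R}.
Arguments SS {K A}.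

Lemma permv_lt0 N (s : 'S_N) j : (0 < N)%N -> (permv s j < N)%N.
Proof.
move=> hN; rewrite /permv; case: insubP => [k _ _|_] //; exact: ltn_ord.
Qed.

Section Main.
Variables (K : fieldType) (A : algType K) (n i : nat).
Hypothesis hi : (i < n)%N.

Let i0 : 'I_n.+1 := @Ordinal n.+1 i (ltnW hi).
Let i1 : 'I_n.+1 := @Ordinal n.+1 i.+1 hi.
Let T : 'S_n.+1 := tperm i0 i1.

Lemma permvT (s : 'S_n.+1) k : (k < n.+1)%N -> permv (s * T) k = tau i (permv s k).
Proof.
move=> hk; rewrite -[k]/(nat_of_ord (Ordinal hk)) !permvE permM /T.
rewrite /tau; case: tpermP => [->|->|h1 h2] /=; first by rewrite eqxx.
  by rewrite eqxx ifN // neq_ltn ltnSn orbT.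
rewrite ifN; last by apply/eqP => h; apply: h1; apply: val_inj.
by rewrite ifN //; apply/eqP => h; apply: h2; apply: val_inj.
Qed.

Definition upp (v : 'S_n.+1) (p : nat) := (permv v p == i) && (permv v p.+1 == i.+1).
Definition dnp (v : 'S_n.+1) (p : nat) := (permv v p == i.+1) && (permv v p.+1 == i).

Lemma dsc_T (v : 'S_n.+1) j : (j < n)%N -> ~~ upp v j -> ~~ dnp v j ->
  (permv (v * T) j.+1 < permv (v * T) j)%N = (permv v j.+1 < permv v j)%N.
Proof.
move=> hj hu hd; have hj' : (j < n.+1)%N by apply: ltnW.
rewrite (permvT v j.+1 hj) (permvT v j hj') tau_ltE //.
by apply/eqP => /permv_inj h; have := h (ltnW hj) hj => /n_Sn.
Qed.

Lemma upp_other (v : 'S_n.+1) p j : (p < n)%N -> upp v p -> (j < n)%N -> j != p ->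
  ~~ upp v j && ~~ dnp v j.
Proof.
move=> hp /andP[/eqP h1 /eqP h2] hj hjp; apply/andP; split.
  apply/negP => /andP[/eqP h3 _]; move: hjp; rewrite (permv_inj (s:=v) (ltnS1 hj) (ltnS1 hp)) ?eqxx //.
  by rewrite h1 h3.
apply/negP => /andP[/eqP h3 /eqP h4].
have e1 : j = p.+1 by apply: (permv_inj (s:=v)) => //; [exact: ltnS1 | rewrite h2 h3].
have e2 : j.+1 = p by apply: (permv_inj (s:=v)) => //; [exact: ltnS1 | rewrite h1 h4].
by move: e2; rewrite e1; lia.
Qed.

Lemma dnp_other (v : 'S_n.+1) p j : (p < n)%N -> dnp v p -> (j < n)%N -> j != p ->
  ~~ upp v j && ~~ dnp v j.
Proof.
move=> hp /andP[/eqP h1 /eqP h2] hj hjp; apply/andP; split; last first.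
  apply/negP => /andP[/eqP h3 _]; move: hjp; rewrite (permv_inj (s:=v) (ltnS1 hj) (ltnS1 hp)) ?eqxx //.
  by rewrite h1 h3.
apply/negP => /andP[/eqP h3 /eqP h4].
have e1 : j = p.+1 by apply: (permv_inj (s:=v)) => //; [exact: ltnS1 | rewrite h2 h3].
have e2 : j.+1 = p by apply: (permv_inj (s:=v)) => //; [exact: ltnS1 | rewrite h1 h4].
by move: e2; rewrite e1; lia.
Qed.

Lemma count_iota_p k p : (p < n)%N ->
  count (pred1 p) (iota k (n - k)) = (k <= p)%N.
Proof.
move=> hp; rewrite count_pred1_iota; case: (leqP k p) => hk //=.
by have hkn := leq_trans hk (ltnW hp); rewrite subnKC // hp.
Qed.

Lemma adesc_up (v : 'S_n.+1) p k : (p < n)%N -> upp v p ->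
  adesc (v * T) k = (adesc v k + (k <= p))%N.
Proof.
move=> hp hu; rewrite /adesc /= -(count_iota_p k p hp).
have hp' : (p < n.+1)%N by apply: ltnS1.
move: (hu) => /andP[/eqP h1 /eqP h2].
apply: count_bump.
- move=> j; rewrite mem_iota => /andP[hkj hj] hjp.
  have hjn : (j < n)%N.
    by move/leP: hkj => hh1; move/ltP: hj => hh2; apply/ltP; rewrite -?plusE -?minusE in hh2; lia.
  by case/andP: (@upp_other v p j hp hu hjn hjp) => ? ?; rewrite dsc_T.
- by rewrite /= (permvT v p.+1 hp) (permvT v p hp') h1 h2 /tau eqxx ifN ?eqxx // neq_ltn ltnSn orbT.
- by rewrite /= h1 h2 ltnNge leqnSn.
Qed.

Lemma adesc_dn (v : 'S_n.+1) p k : (p < n)%N -> dnp v p ->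
  adesc v k = (adesc (v * T) k + (k <= p))%N.
Proof.
move=> hp hu; rewrite /adesc /= -(count_iota_p k p hp).
have hp' : (p < n.+1)%N by apply: ltnW.
move: (hu) => /andP[/eqP h1 /eqP h2].
apply: count_bump.
- move=> j; rewrite mem_iota => /andP[hkj hj] hjp.
  have hjn : (j < n)%N.
    by move/leP: hkj => hh1; move/ltP: hj => hh2; apply/ltP; rewrite -?plusE -?minusE in hh2; lia.
  by case/andP: (@dnp_other v p j hp hu hjn hjp) => ? ?; rewrite dsc_T.
- by rewrite /= h1 h2.
- by rewrite /= (permvT v p.+1 hp) (permvT v p hp') h1 h2 /tau eqxx ifN ?eqxx ?ltnNge ?leqnSn // neq_ltn ltnSn orbT.
Qed.

Lemma adesc_none (v : 'S_n.+1) k : (forall p, (p < n)%N -> ~~ upp v p && ~~ dnp v p) ->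
  adesc (v * T) k = adesc v k.
Proof.
move=> h; rewrite /adesc /=; apply: eq_in_count => j; rewrite mem_iota => /andP[hkj hj].
have hjn : (j < n)%N.
  by move/leP: hkj => hh1; move/ltP: hj => hh2; apply/ltP; rewrite -?plusE -?minusE in hh2; lia.
by case/andP: (h j hjn) => ? ?; rewrite /= dsc_T.
Qed.

Lemma stepB (W : nat -> K) (v : 'S_n.+1) (X : A) :
  let f := fun k => W (permv v k) in
  (forall p, (p < n)%N -> 1 - pre f p != 0) ->
  (coefG n.+1 f (adesc v) - coefG n.+1 f (adesc (v * T))) *: X =
  \sum_(p < n | upp v p) (Cj n.+1 f (adesc v) p *: X)
  - \sum_(p < n | dnp v p) (Cj n.+1 f (adesc (v * T)) p *: X).
Proof.
move=> f hnz.
case: (pickP (fun p : 'I_n => upp v p)) => [p hup | nup].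
  have hpn := ltn_ord p.
  rewrite (big_pred1 p); last first.
    move=> q /=; case: (eqVneq q p) => [->|hqp] //.
    have hqp' : nat_of_ord q != p by [].
    by case/andP: (@upp_other v p q hpn hup (ltn_ord q) hqp') => /negbTE.
  rewrite big_pred0; last first.
    move=> q /=; case: (eqVneq (nat_of_ord q) p) => [->|hqp].
      by move: hup => /andP[/eqP h1 _]; rewrite /dnp h1 (ltn_eqF (ltnSn i)).
    by case/andP: (@upp_other v p q hpn hup (ltn_ord q) hqp) => _ /negbTE.
  rewrite subr0 (@coefG_ext K n.+1 f f (adesc (v * T)) (fun k => adesc v k + (k <= p))%N) //;
    last by move=> k _; rewrite (@adesc_up v p k hpn hup).
  rewrite coefG_shift; last exact: ltnS1.
  rewrite -{1}[coefG _ _ _]mulr1 -mulrBr coefG_Cj //; [exact: ltnS1 | exact: hnz].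
case: (pickP (fun p : 'I_n => dnp v p)) => [p hdn | ndn].
  have hpn := ltn_ord p.
  rewrite (big_pred1 p (P := fun q : 'I_n => dnp v q)); last first.
    move=> q /=; case: (eqVneq q p) => [->|hqp] //.
    have hqp' : nat_of_ord q != p by [].
    by case/andP: (@dnp_other v p q hpn hdn (ltn_ord q) hqp') => _ /negbTE.
  rewrite big_pred0 //.
  rewrite sub0r (@coefG_ext K n.+1 f f (adesc v) (fun k => adesc (v * T) k + (k <= p))%N) //;
    last by move=> k _; rewrite (@adesc_dn v p k hpn hdn).
  rewrite coefG_shift; last exact: ltnS1.
  rewrite -{2}[coefG _ _ (adesc (v * T))]mulr1 -mulrBr -scaleNr -[pre f p - 1]opprB mulrN.
  rewrite coefG_Cj //; [exact: ltnS1 | exact: hnz].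
rewrite !big_pred0 // subrr (@coefG_ext K n.+1 f f (adesc (v * T)) (adesc v)) ?subrr ?scale0r //.
move=> k _; apply: adesc_none => p hp.
by rewrite (nup (Ordinal hp)) (ndn (Ordinal hp)).
Qed.

Lemma bump_lt c a b : (bump c a < bump c b)%N = (a < b)%N.
Proof.
rewrite /bump; case: (leqP c a) => ha; case: (leqP c b) => hb;
  rewrite ?add1n ?add0n;
  apply/idP/idP => /leP h; apply/leP; move/leP: ha; move/leP: hb; lia.
Qed.

Lemma bump_lti x : x != i -> (bump i.+1 x < i.+1)%N = (x < i)%N.
Proof.
move=> /eqP hx; rewrite /bump; case: (leqP i.+1 x) => ha;
  rewrite ?add1n ?add0n;
  apply/idP/idP => /leP h; apply/leP; move/leP: ha; lia.
Qed.

Section Lift.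
Variables (rho : 'S_n) (v : 'S_n.+1) (p : nat).
Hypothesis hp : (p < n)%N.
Hypothesis hrp : permv rho p = i.
Hypothesis V1 : forall k, (k < n)%N -> permv v (bump p.+1 k) = bump i.+1 (permv rho k).
Hypothesis V2 : permv v p.+1 = i.+1.

Lemma vE_lo x : (x <= p)%N -> permv v x = bump i.+1 (permv rho x).
Proof.
move=> hx; have hxn : (x < n)%N by apply: leq_ltn_trans hp.
by rewrite -V1 // /bump leqNgt ltnS hx.
Qed.

Lemma vE_hi x : (p < x)%N -> (x < n)%N -> permv v x.+1 = bump i.+1 (permv rho x).
Proof. by move=> hx hxn; rewrite -V1 // /bump hx. Qed.

Lemma rho_neq x : (x < n)%N -> x != p -> permv rho x != i.
Proof.
move=> hx hxp; apply: contra hxp => /eqP h; apply/eqP.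
by apply: (permv_inj (s:=rho)) => //; rewrite h hrp.
Qed.

Lemma dsc_lift_hi j : (p <= j)%N -> (j.+1 < n)%N ->
  (permv v j.+2 < permv v j.+1)%N = (permv rho j.+1 < permv rho j)%N.
Proof.
move=> hpj hjn; rewrite (@vE_hi j.+1) //.
case: (eqVneq j p) => [ejp|hjp].
  rewrite ejp V2 hrp bump_lti //; apply: rho_neq; first by rewrite -ejp.
  by rewrite neq_ltn ltnSn orbT.
have hpj' : (p < j)%N by rewrite ltn_neqAle eq_sym hjp hpj.
by rewrite vE_hi ?bump_lt // (ltn_trans _ hjn).
Qed.

Lemma adesc_lift_hi k : (p <= k)%N -> adesc v k.+1 = adesc rho k.
Proof.
move=> hpk; rewrite /adesc /=.
have -> : (n.-1 - k = n - k.+1)%N by rewrite subnS -subn1 subnAC subn1.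
rewrite -[k.+1]add1n iotaDl count_map; apply: eq_in_count => j.
rewrite mem_iota => /andP[hkj hj]; rewrite /= add1n.
apply: dsc_lift_hi; first by apply: leq_trans hkj.
by move/leP: hkj => hh1; move/ltP: hj => hh2; apply/ltP; rewrite -?plusE -?minusE in hh2; lia.
Qed.

Lemma adesc_lift_lo k : (k <= p)%N -> adesc v k = adesc rho k.
Proof.
move=> hkp; have e1 : adesc v p.+1 = adesc rho p by apply: adesc_lift_hi.
move: e1; rewrite /adesc /=.
have -> : (n - k = (p - k) + (n - p))%N.
  by move/leP: hkp => hh1; move/ltP: hp => hh2; rewrite -!minusE -plusE; lia.
have -> : (n.-1 - k = (p - k) + (n.-1 - p))%N.
  by move/leP: hkp => hh1; move/ltP: hp => hh2; rewrite -!minusE -plusE -subn1 -!minusE; lia.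
rewrite !iotaD !count_cat subnKC // => e1; congr (_ + _)%N; last first.
  rewrite -e1; have -> : (n - p = (n - p.+1).+1)%N by rewrite subnSK.
  by rewrite /= V2 (@vE_lo p) // hrp /bump ltnn /= ltnNge leqnSn add0n.
apply: eq_in_count => j; rewrite mem_iota subnKC // => /andP[hkj hjp].
by rewrite /= !vE_lo ?bump_lt // ltnW.
Qed.
End Lift.

Lemma mrg_bump (R : Type) (h : nat -> R) y x : x != i -> mrg h y i x = h (bump i.+1 x).
Proof.
move=> /eqP hx; rewrite /mrg /bump; case: (leqP i.+1 x) => h1.
  rewrite ltnNge (ltnW h1) /= ifN ?add1n //; apply/eqP => e; move: h1; rewrite e ltnn.
  done.
rewrite add0n ltn_neqAle -ltnS h1 andbT; case: (eqVneq x i) => //.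
Qed.

Lemma tau_bump x : x != i -> tau i (bump i.+1 x) = bump i.+1 x.
Proof.
move=> /eqP hx; rewrite /tau /bump; case: (leqP i.+1 x) => h1; rewrite ?add1n ?add0n.
  rewrite ifN; last by apply/eqP => e; move/leP: h1; lia.
  by rewrite ifN //; apply/eqP => e; move/leP: h1; lia.
rewrite ifN; last by apply/eqP => e; move/leP: h1; lia.
by rewrite ifN //; apply/eqP => e; move/leP: h1; lia.
Qed.

Lemma adesc_asc (v : 'S_n.+1) p : (p < n)%N -> upp v p -> adesc v p = adesc v p.+1.
Proof.
move=> hp /andP[/eqP h1 /eqP h2]; rewrite /adesc /=.
rewrite -(subnSK hp) /= h1 h2 ltnNge leqnSn add0n.
by [].
Qed.

Lemma tau_swap (v : 'S_n.+1) p k : (p < n)%N -> upp v p -> (k < n.+1)%N ->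
  tau i (permv v k) = permv v (tau p k).
Proof.
move=> hp /andP[/eqP h1 /eqP h2] hk; rewrite {2}/tau.
case: (eqVneq k p) => [->|hkp]; first by rewrite h1 h2 /tau eqxx.
case: (eqVneq k p.+1) => [->|hkp1]; first by rewrite h1 h2 /tau eqxx ifN // neq_ltn ltnSn orbT.
rewrite /tau ifN; last first.
  apply: contra hkp => /eqP e; apply/eqP; apply: (permv_inj (s:=v)) => //; first exact: ltnS1.
  by rewrite e h1.
rewrite ifN //; apply: contra hkp1 => /eqP e; apply/eqP; apply: (permv_inj (s:=v)) => //.
by rewrite e h2.
Qed.

Lemma stepA (W : nat -> K) (F : nat -> A) :
  SS n.+1 (fun k => W (tau i k)) (fun k => F (tau i k)) =
  \sum_(s : 'S_n.+1) coefG n.+1 (fun k => W (permv s k)) (adesc (s * T)) *: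
     \prod_(k < n.+1) F (permv s k).
Proof.
rewrite /SS (reindex_inj (mulIg T)) /=; apply: eq_bigr => s _.
congr (_ *: _).
  apply: coefG_ext => // k hk; by rewrite permvT // tauK.
by apply: eq_bigr => k _; rewrite permvT // tauK.
Qed.

Lemma upp_dnT (s : 'S_n.+1) p : (p < n)%N -> dnp (s * T) p = upp s p.
Proof.
move=> hp; rewrite /dnp /upp (permvT s p.+1 hp) (permvT s p (ltnS1 hp)).
have E1 x : (tau i x == i.+1) = (x == i).
  rewrite /tau; case: (eqVneq x i) => [_|h1]; first by rewrite eqxx.
  case: (eqVneq x i.+1) => [_|h2]; first by rewrite (ltn_eqF (ltnSn i)).
  by rewrite (negbTE h2).
have E2 x : (tau i x == i) = (x == i.+1).
  rewrite /tau; case: (eqVneq x i) => [e|h1]; first by rewrite e eq_sym.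
  case: (eqVneq x i.+1) => [_|h2]; first by rewrite eqxx.
  by rewrite (negbTE h1).
by rewrite E1 E2.
Qed.

Lemma bump_eqi x : (bump i.+1 x == i) = (x == i).
Proof.
rewrite /bump; case: (leqP i.+1 x) => h; rewrite ?add1n ?add0n //.
by rewrite (gtn_eqF h) (gtn_eqF (leqW h)).
Qed.

Theorem core (W : nat -> K) (F : nat -> A)
  (Hw : forall g : nat -> nat, (forall j, (g j < n.+1)%N) ->
          forall k, 1 - pre (fun j => W (g j)) k != 0) :
  SS n.+1 W F - SS n.+1 (fun k => W (tau i k)) (fun k => F (tau i k)) =
  SS n (mrg W (W i * W i.+1) i) (mrg F (F i * F i.+1 - F i.+1 * F i) i).
Proof.
rewrite stepA /SS -sumrB.
pose Fp (s : 'S_n.+1) := \prod_(k < n.+1) F (permv s k).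
pose Fq (s : 'S_n.+1) := \prod_(k < n.+1) F (tau i (permv s k)).
pose fs (s : 'S_n.+1) := fun k => W (permv s k).
transitivity (\sum_(s : 'S_n.+1) \sum_(p < n | upp s p)
     Cj n.+1 (fs s) (adesc s) p *: (Fp s - Fq s)).
  transitivity (\sum_(s : 'S_n.+1) (\sum_(p < n | upp s p) Cj n.+1 (fs s) (adesc s) p *: Fp s
     - \sum_(p < n | dnp s p) Cj n.+1 (fs s) (adesc (s * T)%g) p *: Fp s)).
    apply: eq_bigr => s _; rewrite -scalerBl stepB // => p _.
    by apply: Hw => j; apply: permv_lt0.
  rewrite sumrB.
  have -> : \sum_(s : 'S_n.+1) \sum_(p < n | dnp s p) Cj n.+1 (fs s) (adesc (s * T)%g) p *: Fp s
      = \sum_(s : 'S_n.+1) \sum_(p < n | upp s p) Cj n.+1 (fs s) (adesc s) p *: Fq s.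
    rewrite (reindex_inj (mulIg T)) /=; apply: eq_bigr => s _.
    have eTT : (s * T * T)%g = s by rewrite -mulgA tperm2 mulg1.
    apply: eq_big => [p|p hp]; first by rewrite upp_dnT.
    rewrite eTT; congr (_ *: _).
      have hu : upp s p by rewrite -upp_dnT.
      apply: Cj_swap; first exact: ltn_ord.
        by apply: adesc_asc.
      by move=> k hk; rewrite /fs permvT // (@tau_swap s p k (ltn_ord p) hu hk).
    by apply: eq_bigr => k _; rewrite permvT.
  rewrite -sumrB; apply: eq_bigr => s _; rewrite -sumrB.
  by apply: eq_bigr => p _; rewrite scalerBr.
pose W' := mrg W (W i * W i.+1) i.
pose F' := mrg F (F i * F i.+1 - F i.+1 * F i) i.
pose H (r : 'S_n) := coefG n (fun k => W' (permv r k)) (adesc r) *: \prod_(k < n) F' (permv r k).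
pose i_n : 'I_n := Ordinal hi.
transitivity (\sum_(r : 'S_n) \sum_(p < n | permv r p == i) H r); last first.
  apply: eq_bigr => r _; rewrite (big_pred1 (r^-1 i_n))%g // => q /=.
  rewrite permvE; apply/eqP/eqP => [e | ->]; last by rewrite permKV.
  have e' : r q = i_n by apply: val_inj.
  by rewrite -e' permK.
rewrite (exchange_big_dep xpredT) //= [RHS](exchange_big_dep xpredT) //=.
apply: eq_bigr => p _.
pose a : 'I_n.+1 := lift ord0 p.
rewrite (eq_bigl (fun s : 'S_n.+1 => (s a == i1) && (permv s p == i))); last first.
  move=> s; rewrite /upp andbC /=; congr (_ && _).
  by rewrite -[p.+1]/(nat_of_ord a) permvE.
rewrite big_mkcondr sum_lift [RHS]big_mkcond /=; apply: eq_bigr => r _.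
set v := lift_perm a i1 r.
have hp := ltn_ord p.
have V1 : forall k, (k < n)%N -> permv v (bump p.+1 k) = bump i.+1 (permv r k).
  move=> k hk; have := congr1 (@nat_of_ord _) (lift_perm_lift a i1 r (Ordinal hk)).
  have ha : nat_of_ord a = p.+1 by [].
  have hb : bump 0 p = p.+1 by rewrite /bump leq0n add1n.
  rewrite -!permvE /= -(@permvE n r (Ordinal hk)) /= hb; apply.
have V2 : permv v p.+1 = i.+1 by rewrite -[p.+1]/(nat_of_ord a) permvE lift_perm_id.
have Vp : permv v p = bump i.+1 (permv r p).
  by have := V1 p hp; rewrite /bump ltnn add0n.
rewrite Vp bump_eqi; case: (eqVneq (permv r p) i) => [hrp|] //.
have vlo := @vE_lo r v p hp V1.
have vhi := @vE_hi r v p V1.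
have rn := @rho_neq r p hp hrp.
have alo := @adesc_lift_lo r v p hp hrp V1 V2.
have ahi := @adesc_lift_hi r v p hp hrp V1 V2.
have bii : bump i.+1 i = i by rewrite /bump ltnn add0n.
have rnk : forall k, (k < n)%N -> k != p -> permv r k != i.
  by move=> k hk hkp; apply: rn.
rewrite /H; congr (_ *: _).
  apply: (@Cj_merge K n (fs v) (fun k => W' (permv r k)) (adesc v) (adesc r) p hp).
  - by rewrite alo // ahi.
  - move=> k hk; have hkn := ltn_trans hk hp.
    rewrite /fs /W' mrg_bump ?vlo ?(ltnW hk) //; apply: rnk => //.
    by rewrite neq_ltn hk.
  - by rewrite hrp /W' /mrg ltnn eqxx /fs Vp hrp bii V2.
  - move=> k /andP[hk1 hk2]; rewrite /fs /W' vhi // mrg_bump //; apply: rnk => //.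
    by rewrite neq_ltn hk1 orbT.
  - by move=> k hk; rewrite alo // ltnW.
  - by move=> k /andP[hk1 hk2]; rewrite ahi.
pose g1 (k : nat) := if k == nat_of_ord p then F i * F i.+1 else F (bump i.+1 (permv r k)).
pose g2 (k : nat) := if k == nat_of_ord p then F i.+1 * F i else F (bump i.+1 (permv r k)).
have tii : tau i i = i.+1 by rewrite /tau eqxx.
have tii1 : tau i i.+1 = i by rewrite /tau (gtn_eqF (ltnSn i)) eqxx.
rewrite /Fp /Fq (@merge_prod _ n p (fun k => F (permv v k)) g1) //; first last.
- move=> k /andP[hk1 hk2]; rewrite /g1 vhi // ifN //; by rewrite neq_ltn hk1 orbT.
- by rewrite /g1 eqxx Vp hrp bii V2.
- move=> k hk; rewrite /g1 vlo ?(ltnW hk) // ifN //; by rewrite neq_ltn hk.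
rewrite (@merge_prod _ n p (fun k => F (tau i (permv v k))) g2) //; first last.
- move=> k /andP[hk1 hk2]; rewrite /g2 vhi // tau_bump ?ifN //; first by rewrite neq_ltn hk1 orbT.
  by apply: rnk => //; rewrite neq_ltn hk1 orbT.
- by rewrite /g2 eqxx Vp hrp bii V2 tii tii1.
- move=> k hk; have hkn := ltn_trans hk hp.
  rewrite /g2 vlo ?(ltnW hk) // tau_bump ?ifN //; first by rewrite neq_ltn hk.
  by apply: rnk => //; rewrite neq_ltn hk.
apply: (@diff_prod _ n p g1 g2 (fun k => F' (permv r k)) hp).
- move=> k hk hkp; rewrite /g1 /g2 (negbTE hkp) /F' mrg_bump //; last exact: rnk.
- by rewrite /g1 /g2 eqxx /F' hrp /mrg ltnn eqxx.
Qed.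
End Main.


Lemma nth_swap (T : Type) (x0 : T) i (s : seq T) k : (i.+1 < size s)%N -> (k < size s)%N ->
  nth x0 (swap_at x0 i s) k = nth x0 s (tau i k).
Proof.
move=> hi hk; rewrite /swap_at nth_cat size_take (ltnW hi).
rewrite /tau; case: (ltngtP k i) => h.
- by rewrite nth_take // ifN // neq_ltn (ltn_trans h (ltnSn i)).
- case: (eqVneq k i.+1) => [->|hk1]; first by rewrite subSnn.
  have h2 : (i.+1 < k)%N by rewrite ltn_neqAle eq_sym hk1 h.
  rewrite -(subnSK h) /= -(subnSK h2) /= nth_drop.
  by congr nth; move/ltP: h2 => h2; rewrite -!minusE -plusE; lia.
- by rewrite h subnn.
Qed.

Lemma size_swap (T : Type) (x0 : T) i (s : seq T) : (i.+1 < size s)%N ->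
  size (swap_at x0 i s) = size s.
Proof.
move=> hi; rewrite /swap_at size_cat size_take (ltnW hi) /= size_drop.
by move/ltP: hi => hi; rewrite -!minusE -!plusE; lia.
Qed.

Lemma nth_merge (T : Type) (x0 : T) i y (s : seq T) k : (i.+1 < size s)%N ->
  nth x0 (merge_at i y s) k = mrg (nth x0 s) y i k.
Proof.
move=> hi; rewrite /merge_at /mrg nth_cat size_take (ltnW hi).
case: (ltngtP k i) => h.
- by rewrite nth_take.
- rewrite -(subnSK h) /= nth_drop; congr nth.
  by move/ltP: h => h2; rewrite -!minusE -plusE; lia.
- by rewrite h subnn.
Qed.

Lemma size_merge (T : Type) i (y : T) (s : seq T) : (i.+1 < size s)%N ->
  size (merge_at i y s) = (size s).-1.
Proof.
move=> hi; rewrite /merge_at size_cat size_take (ltnW hi) /= size_drop.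
by move/ltP: hi => hi; rewrite -!minusE -!plusE; lia.
Qed.

Lemma mrg_comp (R S : Type) (f : R -> S) h y c k :
  f (mrg h y c k) = mrg (fun j => f (h j)) (f y) c k.
Proof. by rewrite /mrg; case: ifP => _ //; case: ifP. Qed.

Lemma SS_ext (K : fieldType) (A : algType K) N (W W' : nat -> K) (F F' : nat -> A) :
  (forall k, (k < N)%N -> W k = W' k) -> (forall k, (k < N)%N -> F k = F' k) ->
  SS N W F = SS N W' F'.
Proof.
move=> hW hF; rewrite /SS; apply: eq_bigr => s _; congr (_ *: _).
  apply: coefG_ext => // k hk; apply: hW.
  by rewrite -[k]/(nat_of_ord (Ordinal hk)) permvE.
by apply: eq_bigr => k _; rewrite hF // permvE.
Qed.

Lemma AXE (K : fieldType) (A : algType K) (r : nat) (X : 'I_r -> K)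
  (bs : seq ('I_r -> nat)) (Fs : seq A) N : size Fs = N ->
  AX X bs Fs = SS N (fun k => Xroot X (nth (fun _ => 0%N) bs k)) (fun k => nth 0 Fs k).
Proof.
move=> <-; rewrite /AX /SS; apply: eq_bigr => s _; congr (_ *: _).
  rewrite /AXcoef /coefG; apply: eq_bigr => k _; rewrite permvE; congr (_ / (1 - _)).
  rewrite /pre (big_ord_widen (size Fs) (fun j => Xroot X (nth (fun=> 0%N) bs (permv s j))) (ltn_ord k)).
  by apply: eq_big => j // _; rewrite permvE.
by apply: eq_bigr => k _; rewrite permvE.
Qed.

Arguments AXE {K A r} X bs {Fs N} _.
Arguments size_swap {T} x0 {i s} _.
Arguments size_merge {T i} y {s} _.

Lemma Xroot_add (K : fieldType) r (X : 'I_r -> K) b c :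
  Xroot X (addroot b c) = Xroot X b * Xroot X c.
Proof. by rewrite /Xroot -big_split /=; apply: eq_bigr => j _; rewrite exprD. Qed.

Theorem lemma4p5 (K : fieldType) (A : algType K) (r : nat) (X : 'I_r -> K)
    (HX : forall n : 'I_r -> nat, (exists j, n j != 0%N) ->
            \prod_(j < r) X j ^+ n j != 1)
    (m : nat) (bs : seq ('I_r -> nat)) (Fs : seq A)
    (hm : (2 <= m)%N) (hbs : size bs = m) (hFs : size Fs = m)
    (hpos : forall k, (k < m)%N -> exists j, nth (fun _ => 0%N) bs k j != 0%N)
    (l : nat) (hl : (1 <= l < m)%N) :
  let b0 := fun _ : 'I_r => 0%N in
  let i := l.-1 in
  AX X bs Fs - AX X (swap_at b0 i bs) (swap_at 0 i Fs)
  = AX X (merge_at i (addroot (nth b0 bs i) (nth b0 bs i.+1)) bs)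
         (merge_at i (nth 0 Fs i * nth 0 Fs i.+1 - nth 0 Fs i.+1 * nth 0 Fs i) Fs).
Proof.
move=> b0 i.
case: m hm hbs hFs hpos hl => [|n] // hm hbs hFs hpos /andP[hl1 hl2].
have hi : (i < n)%N by rewrite /i -ltnS prednK.
have hiF : (i.+1 < size Fs)%N by rewrite hFs.
have hib : (i.+1 < size bs)%N by rewrite hbs.
rewrite (AXE X bs hFs) (AXE X (swap_at b0 i bs) (size_swap 0 hiF)).
rewrite (AXE X (merge_at i (addroot (nth b0 bs i) (nth b0 bs i.+1)) bs)
   (size_merge (nth 0 Fs i * nth 0 Fs i.+1 - nth 0 Fs i.+1 * nth 0 Fs i) hiF)) hFs /=.
set W := fun k => Xroot X (nth b0 bs k).
set F := fun k => nth 0 Fs k.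
rewrite (@SS_ext _ _ n.+1 (fun k => Xroot X (nth b0 (swap_at b0 i bs) k)) (fun k => W (tau i k))
   (fun k => nth 0 (swap_at 0 i Fs) k) (fun k => F (tau i k))); first last.
- by move=> k hk; rewrite nth_swap // hFs.
- by move=> k hk; rewrite nth_swap // hbs.
rewrite (@SS_ext _ _ n _ (mrg W (W i * W i.+1) i) _ (mrg F (F i * F i.+1 - F i.+1 * F i) i)); first last.
- by move=> k hk; rewrite nth_merge.
- by move=> k hk; rewrite nth_merge // (@mrg_comp _ _ (Xroot X)) Xroot_add.
apply: core => // g hg k.
rewrite subr_eq0 eq_sym /pre /W /Xroot.
rewrite exchange_big /=.
under eq_bigr do rewrite prodrXr.
apply: HX.
have [j hj] := hpos (g 0%N) (hg 0%N).
exists j; rewrite -lt0n big_ord_recl /=.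
by rewrite -lt0n in hj; apply: leq_trans hj (leq_addr _ _).
Qed.
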